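(* Let $\mathcal{H}$ be a separable infinite-dimensional complex Hilbert space, let $T\in\mathscr{B}(\mathcal{H})$ have dense range, let $\varepsilon>0$ and let $x_0\in\mathcal{H}$ with $\|x_0\|>\varepsilon$. Then the map $t\mapsto\|y_{tx_0,\varepsilon}\|$ is non-decreasing on the interval $\left]\frac{\varepsilon}{\|x_0\|},+\infty\right[$.
   Context: For $T\in\mathscr{B}(\mathcal{H})$ with dense range, $x\neq 0$ and $0<\varepsilon<\|x\|$, the extremal vector $y_{x,\varepsilon}$ is the unique vector $y_0\in\mathcal{H}$ with $\|Ty_0-x\|\leqslant\varepsilon$ and $\|y_0\|=\inf\{\|y\|:\|Ty-x\|\leqslant\varepsilon\}$. *)

(* Defs.v *)
From HB Require Import structures.
From mathcomp Require Import all_boot all_order all_algebra.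
From mathcomp Require Import all_classical all_reals all_analysis.
From mathcomp Require Import complex.
From mathcomp Require Export sesquilinear.
Import Order.TTheory GRing.Theory Num.Theory Num.Def.
Import numFieldNormedType.Exports.
Local Open Scope ring_scope.
Local Open Scope classical_set_scope.

(* A complex Hilbert space is a complete normed C-module H whose norm is
   induced by a (conjugate-symmetric, positive definite) inner product. *)

(* the norm of a vector as a real number (the norm of H takes values in
   R[i], but is always real and nonnegative) *)
Definition hnorm {R : realType} {H : normedModType R[i]} (x : H) : R :=
  complex.Re `|x|.

Definition inner_induces_norm {R : realType} {H : normedModType R[i]}
  (ip : {dot H for conjC}) : Prop :=
  forall x : H, `|x| ^+ 2 = ip x x.

Definition separable_space (T : topologicalType) : Prop :=
  exists D : set T, countable D /\ dense D.

Definition infinite_dimensional {K : numDomainType} (V : lmodType K) : Prop :=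
  forall n : nat, exists v : 'I_n -> V,
    forall c : 'I_n -> K, \sum_(i < n) c i *: v i = 0 -> forall i, c i = 0.

Definition bounded_op {R : realType} {H : normedModType R[i]} (T : H -> H) : Prop :=
  exists M : R, forall x : H, hnorm (T x) <= M * hnorm x.

Definition dense_range {R : realType} {H : normedModType R[i]} (T : H -> H) : Prop :=
  dense (range T).

Definition is_extremal_vector {R : realType} {H : normedModType R[i]}
  (T : H -> H) (x : H) (eps : R) (y0 : H) : Prop :=
  hnorm (T y0 - x) <= eps /\
  hnorm y0 = inf [set hnorm y | y in [set y : H | hnorm (T y - x) <= eps]].

(* Main.v *)
Require Import Defs.
From HB Require Import structures.
From mathcomp Require Import all_boot all_order all_algebra.
From mathcomp Require Import all_classical all_reals all_analysis.
From mathcomp Require Import complex sesquilinear.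
From mathcomp Require Import ring lra.
Import Order.TTheory GRing.Theory Num.Theory Num.Def.
Import numFieldNormedType.Exports.
Local Open Scope ring_scope.
Local Open Scope classical_set_scope.

Lemma hnorm_ge0 (R : realType) (H : normedModType R[i]) (x : H) : 0 <= hnorm x.
Proof.
rewrite /hnorm. have := normr_ge0 x. case: `|x| => a b.
rewrite lecE /=. by case/andP.
Qed.

Lemma hnormZ (R : realType) (H : normedModType R[i]) (c : R) (x : H) :
  0 <= c -> hnorm ((c%:C)%C *: x) = c * hnorm x.
Proof.
move=> c0; rewrite /hnorm normrZ ger0_norm; last by rewrite lecE /= eqxx c0.
case: `|x| => a b /=. ring.
Qed.

Theorem mainTheorem9 (R : realType) (H : completeNormedModType R[i])
  (ip : {dot H for conjC}) (hip : inner_induces_norm ip)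
  (hsep : separable_space H) (hinf : infinite_dimensional H)
  (T : {linear H -> H}) (hTb : bounded_op T) (hTd : dense_range T)
  (eps : R) (heps : 0 < eps) (x0 : H) (hx0 : eps < hnorm x0) :
  forall (t1 t2 : R), eps / hnorm x0 < t1 -> t1 <= t2 ->
  forall y1 y2 : H,
    is_extremal_vector T ((t1%:C)%C *: x0) eps y1 ->
    is_extremal_vector T ((t2%:C)%C *: x0) eps y2 ->
    hnorm y1 <= hnorm y2.
Proof.
move=> t1 t2 ht1 ht12 y1 y2 [_ ->] [hy2 _].
have t1p : 0 < t1.
  apply: lt_trans ht1; apply: divr_gt0 => //; exact: lt_trans hx0.
have t2p : 0 < t2 by apply: lt_le_trans ht12.
set c := t1 / t2.
have c0 : 0 <= c by rewrite /c divr_ge0 // ltW.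
have c1 : c <= 1 by rewrite /c ler_pdivrMr // mul1r.
have key : T ((c%:C)%C *: y2) - (t1%:C)%C *: x0
    = (c%:C)%C *: (T y2 - (t2%:C)%C *: x0).
  rewrite linearZ scalerBr scalerA.
  have -> : ((c%:C)%C * (t2%:C)%C) = (t1%:C)%C.
    rewrite /c; apply/eqP; rewrite eq_complex /= !mul0r !mulr0 subr0 addr0 eqxx andbT.
    by rewrite mulfVK // gt_eqF.
  by [].
apply: le_trans (_ : hnorm ((c%:C)%C *: y2) <= _).
  apply: ge_inf.
    exists 0 => r [y _ <-]; exact: hnorm_ge0.
  exists ((c%:C)%C *: y2) => //=.
  rewrite key hnormZ //.
  apply: le_trans (_ : 1 * eps <= _); last by rewrite mul1r.
  apply: ler_pM => //; exact: hnorm_ge0.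
rewrite hnormZ //.
apply: le_trans (_ : 1 * hnorm y2 <= _); last by rewrite mul1r.
apply: ler_pM => //; exact: hnorm_ge0.
Qed.
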